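(* No semisimple representation $\Gamma\to\mathrm{SL}_4\mathbb{R}$ is irreducible. More precisely, every semisimple representation $\rho:\Gamma\to\mathrm{SL}_4\mathbb{R}$ preserves a line or a plane of $\mathbb{R}^4$, and $$X(\Gamma,\mathrm{SL}_4\mathbb{R})=i_*\big(\mathrm{Rep}^{SS}(\Gamma,\mathrm{SL}_3\mathbb{R})\big)/\mathrm{SL}_4\mathbb{R}\ \cup\ j_*\big(\mathrm{Rep}^{SS}(\Gamma,\mathrm{SL}_2\mathbb{R}\times\mathrm{SL}_2\mathbb{R})\big)/\mathrm{SL}_4\mathbb{R},$$ i.e. every semisimple representation is conjugate either to $\rho'\oplus 1$ with $\rho':\Gamma\to\mathrm{SL}_3\mathbb{R}$ semisimple, or to $\rho_1\oplus\rho_2$ with $\rho_1,\rho_2:\Gamma\to\mathrm{SL}_2\mathbb{R}$ semisimple.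
   Context: $\Gamma=\langle a,b\mid a^3=b^3=(ab)^3=1\rangle$ is the orbifold fundamental group of $S^2(3,3,3)$. $\mathrm{Rep}^{SS}(\Gamma,H)$ denotes semisimple representations $\Gamma\to H$; $i:\mathrm{SL}_3\mathbb{R}\hookrightarrow\mathrm{SL}_4\mathbb{R}$, $A\mapsto A\oplus 1$, and $j:\mathrm{SL}_2\mathbb{R}\times\mathrm{SL}_2\mathbb{R}\hookrightarrow\mathrm{SL}_4\mathbb{R}$, $(A,B)\mapsto A\oplus B$, are the natural inclusions and the star denotes postcomposition. $X(\Gamma,\mathrm{SL}_4\mathbb{R})$ is the real GIT quotient, identified with $\mathrm{Rep}^{SS}(\Gamma,\mathrm{SL}_4\mathbb{R})/\mathrm{SL}_4\mathbb{R}$. *)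

(* Defs.v *)
From HB Require Import structures.
From mathcomp Require Export all_boot all_order all_algebra.
From mathcomp Require Export reals.
Set Implicit Arguments. Unset Strict Implicit. Unset Printing Implicit Defensive.
Import Order.TTheory GRing.Theory Num.Theory.
Local Open Scope ring_scope.

(* Matrices act on COLUMN vectors of R^n (v |-> M *m v).  A linear subspace
   of R^n is encoded (mxalgebra style) as the row space of a matrix U whose
   rows are (transposed) vectors.  U is stable under M iff M u lies in U for
   every u in U, i.e. (U *m M^T <= U)%MS. *)
Definition col_stable (R : fieldType) (n : nat) (M U : 'M[R]_n) : bool :=
  (U *m M^T <= U)%MS.

Definition invariant (R : fieldType) (n : nat) (gs : seq 'M[R]_n) (U : 'M[R]_n) : bool :=
  all (fun M => col_stable M U) gs.

Definition semisimple (R : fieldType) (n : nat) (gs : seq 'M[R]_n) : Prop :=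
  forall U : 'M[R]_n, invariant gs U ->
    exists V : 'M[R]_n, invariant gs V /\
      (U :&: V == (0 : 'M[R]_n))%MS /\ (U + V == 1%:M)%MS.

(* A representation Gamma -> SL_n(R), Gamma = <a,b | a^3 = b^3 = (ab)^3 = 1>,
   is the same as the pair (A, B) = (rho a, rho b) of matrices of determinant
   1 satisfying the defining relations. *)
Definition cube (R : pzRingType) (n : nat) (M : 'M[R]_n) : 'M[R]_n := M *m M *m M.

Definition rep_SL (R : comPzRingType) (n : nat) (A B : 'M[R]_n) : Prop :=
  [/\ \det A = 1, \det B = 1, cube A = 1%:M, cube B = 1%:M & cube (A *m B) = 1%:M].

Definition incl_i (R : pzRingType) (M : 'M[R]_3) : 'M[R]_4 :=
  block_mx M 0 0 (1%:M : 'M[R]_1).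

Definition incl_j (R : pzRingType) (M N : 'M[R]_2) : 'M[R]_4 :=
  block_mx M 0 0 N.

(* Main.v *)
Require Import Defs.
From mathcomp Require Import complex ring lra zify.
Import Order.TTheory GRing.Theory Num.Theory.
Local Open Scope ring_scope.
Set Implicit Arguments. Unset Strict Implicit. Unset Printing Implicit Defensive.

Section Gen.
Variable F : fieldType.

Lemma ker_fix n (A : 'M[F]_n) m (K : 'M_(m,n)) : (K <= kermx (A - 1%:M))%MS -> K *m A = K.
Proof.
move/sub_kermxP; rewrite mulmxBr mulmx1 => /eqP; rewrite subr_eq0 => /eqP //.
Qed.

Lemma fix_count n (A B : 'M[F]_n) :
  A *m A *m A = 1%:M ->
  (n < \rank (kermx (A - 1%:M)) + \rank (kermx (B - 1%:M)) + \rank (kermx (B *m A - 1%:M)))%N ->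
  (exists x : 'rV_n, x != 0 /\ x *m A = x /\ x *m B = x) \/
  (exists w : 'cV_n, w != 0 /\ A *m w = w /\ B *m w = w).
Proof.
move=> A3 hrk.
set KA := kermx (A - 1%:M); set KB := kermx (B - 1%:M); set KC := kermx (B *m A - 1%:M).
have hA : KA *m A = KA by apply: ker_fix.
have hB : KB *m B = KB by apply: ker_fix.
have hC : KC *m (B *m A) = KC by apply: ker_fix.
pose S0 := block_mx (block_mx KA 0 0 KB) 0 0 KC.
pose D0 : 'M[F]_(n + n + n, n + n) :=
  col_mx (col_mx (row_mx (- 1%:M) 0) (row_mx 1%:M (- 1%:M))) (row_mx 0 1%:M).
pose D1 : 'M[F]_(n + n, n) := col_mx (1%:M - A *m A) (B - A *m A).
have D01 : S0 *m D0 *m D1 = 0.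
  rewrite -mulmxA /D0 /D1 !mul_col_mx !mul_row_col !mul0mx !addr0 !add0r !mul1mx.
  rewrite !mul_block_col ?mulmx0 ?mul0mx ?addr0 ?add0r.
  idtac.
  have e1 : KA *m - (1%:M - A *m A) = 0.
    by rewrite mulmxN mulmxBr mulmx1 mulmxA hA hA subrr oppr0.
  have e2 : KB *m (1%:M - A *m A - (B - A *m A)) = 0.
    by rewrite opprB addrA subrK mulmxBr mulmx1 hB subrr.
  have e3 : KC *m (B - A *m A) = 0.
    have : KC *m B = KC *m (A *m A).
      by rewrite -[KC *m B]mulmx1 -A3 !mulmxA -(mulmxA KC) hC.
    by move=> h; rewrite mulmxBr h mulmxA subrr.
  by rewrite ?mulNmx ?mul1mx e1 e2 ?e3 !col_mx0.
have [hD1|hD1] := ltnP (\rank D1) n.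
  right.
  set K := cokermx D1.
  have K0 : K != 0.
    by rewrite -mxrank_eq0 mxrank_coker subn_eq0 -ltnNge.
  set w := (nz_row K^T)^T.
  have w0 : w != 0 by rewrite /w trmx_eq0 nz_row_eq0 trmx_eq0.
  have Dw : D1 *m w = 0.
    rewrite /w; have /submxP [D ->] := nz_row_sub K^T.
    by rewrite trmx_mul trmxK mulmxA mulmx_coker mul0mx.
  move: Dw; rewrite /D1 mul_col_mx => /eqP; rewrite col_mx_eq0 => /andP [/eqP e1 /eqP e2].
  move: e1; rewrite mulmxBl mul1mx => /eqP; rewrite subr_eq0 => /eqP e1.
  move: e2; rewrite mulmxBl => /eqP; rewrite subr_eq0 -e1 => /eqP e2.
  exists w; split => //; split => //.
  by rewrite {1}e1 !mulmxA A3 mul1mx.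
left.
have rD1 : \rank D1 = n by apply/eqP; rewrite eqn_leq rank_leq_col.
set T := S0 *m D0.
have sT : (T <= kermx D1)%MS by apply/sub_kermxP.
have rT : (\rank T <= n)%N.
  by have := mxrankS sT; rewrite mxrank_ker rD1 addnK.
have rS0 : \rank S0 = (\rank KA + \rank KB + \rank KC)%N by rewrite /S0 !rank_diag_block_mx.
have hK := mxrank_mul_ker S0 D0.
set K := (S0 :&: kermx D0)%MS in hK.
have K0 : K != 0.
  rewrite -mxrank_eq0; apply/eqP => e; move: hK; rewrite e addn0 rS0 -/T => e'.
  by move: hrk; rewrite -e' ltnNge rT.
set v := nz_row K.
have v0 : v != 0 by rewrite nz_row_eq0.
have vK : (v <= K)%MS := nz_row_sub K.
move: vK; rewrite sub_capmx => /andP [vS vD].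
move/sub_kermxP: vD => vD.
move/submxP: vS => [D eD].
move: eD vD v0; rewrite -(hsubmxK D) -(hsubmxK (lsubmx D)) /S0 !mul_row_block.
rewrite ?mulmx0 ?mul0mx ?addr0 ?add0r => ->.
set x := lsubmx (lsubmx D) *m KA; set y := rsubmx (lsubmx D) *m KB.
set z := rsubmx D *m KC.
rewrite /D0 !mul_row_col !mul_mx_row !mulmx0 !mulmx1 !mulmxN !mulmx1 !add_row_mx.
move/eqP; rewrite row_mx_eq0 => /andP [/eqP e1 /eqP e2] nz.
have yx : y = x by move/eqP: e1; rewrite addr0 addrC subr_eq0 => /eqP.
have zy : z = y by move/eqP: e2; rewrite add0r addrC subr_eq0 => /eqP.
exists x; split.
  apply: contra nz => /eqP x0; rewrite zy yx x0 !row_mx0 //.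
split; first by rewrite /x -mulmxA hA.
by rewrite -yx /y -mulmxA hB.
Qed.
End Gen.

Section Gen2.
Variable F : fieldType.

Lemma inv2E n (M1 M2 U : 'M[F]_n) :
  invariant [:: M1; M2] U = (U *m M1^T <= U)%MS && (U *m M2^T <= U)%MS.
Proof. by rewrite /invariant /col_stable /= andbT. Qed.

Lemma eq0_mx m n (A : 'M[F]_(m, n)) : (A == (0 : 'M_n))%MS = (A == 0).
Proof. by rewrite sub0mx andbT submx0. Qed.

Lemma full_mx m n (A : 'M[F]_(m, n)) : (A == 1%:M)%MS = row_full A.
Proof. by rewrite submx1 sub1mx. Qed.

Lemma rank_compl n (A B : 'M[F]_n) :
  (A :&: B == (0 : 'M_n))%MS -> (A + B == 1%:M)%MS -> (\rank A + \rank B)%N = n.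
Proof.
rewrite eq0_mx full_mx => /eqP e /eqnP r.
by rewrite -mxrank_sum_cap e mxrank0 addn0 r.
Qed.

Lemma pull_eq k n (T : 'M[F]_(k, n)) (Z : 'M_n) :
  (Z <= T)%MS -> (<<Z *m pinvmx T>> *m T :=: Z)%MS.
Proof.
move=> sZT; apply: eqmx_trans (eqmxMr T (genmxE _)) _.
by rewrite mulmxKpV.
Qed.

Lemma stab_inter k n (T : 'M[F]_(k, n)) (M : 'M_n) (X : 'M_k) :
  T *m M^T = X^T *m T -> (T *m M^T <= T)%MS.
Proof. by move=> ->; apply: submxMl. Qed.

Lemma pull_inv k n (T : 'M[F]_(k, n)) (M : 'M_n) (X : 'M_k) (Z : 'M_n) :
  row_free T -> T *m M^T = X^T *m T -> (Z <= T)%MS -> (Z *m M^T <= Z)%MS ->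
  (<<Z *m pinvmx T>> *m X^T <= <<Z *m pinvmx T>>)%MS.
Proof.
move=> fT hT sZT iZ; rewrite -(submxMfree _ _ fT) -mulmxA -hT mulmxA.
by rewrite (eqmxMr _ (pull_eq sZT)) (pull_eq sZT).
Qed.

Lemma semisimple_sub k n (T : 'M[F]_(k, n)) (M1 M2 : 'M_n) (X1 X2 : 'M_k) :
  row_free T -> T *m M1^T = X1^T *m T -> T *m M2^T = X2^T *m T ->
  semisimple [:: M1; M2] -> semisimple [:: X1; X2].
Proof.
move=> fT h1 h2 ss W; rewrite !inv2E => /andP [w1 w2].
have: invariant [:: M1; M2] <<W *m T>>%MS.
  rewrite inv2E !(eqmxMr _ (genmxE _)) !genmxE -!mulmxA h1 h2 !mulmxA !submxMr //.
move=> /ss [V' [iV' [cap' sum']]].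
have eC := cap_eqmx (genmxE (W *m T)) (eqmx_refl V').
have eS := adds_eqmx (genmxE (W *m T)) (eqmx_refl V').
move: cap' sum'; rewrite eC eS => cap' sum'.
move: iV'; rewrite inv2E => /andP [v1 v2].
set Z' := (V' :&: T)%MS.
have sZT : (Z' <= T)%MS by apply: capmxSr.
have iZ (M : 'M_n) (X : 'M_k) : T *m M^T = X^T *m T -> (V' *m M^T <= V')%MS ->
    (Z' *m M^T <= Z')%MS.
  move=> hT hV; rewrite sub_capmx; apply/andP; split.
    by apply: submx_trans hV; apply: submxMr; apply: capmxSl.
  apply: submx_trans (stab_inter hT); apply: submxMr; apply: capmxSr.
set Z := <<Z' *m pinvmx T>>%MS.
exists Z; split.
  rewrite inv2E; apply/andP; split.
    by apply: (pull_inv fT h1 sZT); apply: iZ h1 v1.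
  by apply: (pull_inv fT h2 sZT); apply: iZ h2 v2.
split.
  rewrite eq0_mx -(mulmx_free_eq0 _ fT) -submx0.
  have c0 : ((W *m T) :&: V' <= (0 : 'M_n))%MS by case/andP: cap'.
  apply: submx_trans c0.
  rewrite sub_capmx; apply/andP; split.
    by apply: submxMr; apply: capmxSl.
  apply: submx_trans (submxMr _ (capmxSr _ _)) _.
  by rewrite (pull_eq sZT) capmxSl.
rewrite full_mx /row_full -(mxrankMfree _ fT) (addsmxMr W Z T).
rewrite (adds_eqmx (eqmx_refl _) (pull_eq sZT)) /Z'.
have sWT : (W *m T <= T)%MS by apply: submxMl.
rewrite (matrix_modl V' sWT).
have -> : \rank ((W *m T + V') :&: T)%MS = \rank T.
  apply/eqP; rewrite eqn_leq mxrankS ?capmxSr //= mxrankS //.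
  rewrite sub_capmx submx_refl andbT.
  by apply: submx_trans (submx1 T) _; case/andP: sum' => _; rewrite eS.
exact: fT.
Qed.
End Gen2.

Section Gen3.
Variable F : fieldType.

Lemma submx_diag k m (A A' : 'M[F]_k) (B B' : 'M[F]_m) :
  (A <= A')%MS -> (B <= B')%MS -> (block_mx A 0 0 B <= block_mx A' 0 0 B')%MS.
Proof.
move=> /submxP [D1 ->] /submxP [D2 ->].
have -> : block_mx (D1 *m A') 0 0 (D2 *m B') = block_mx D1 0 0 D2 *m block_mx A' 0 0 B'.
  by rewrite mulmx_block ?mulmx0 ?mul0mx ?addr0 ?add0r.
exact: submxMl.
Qed.

Lemma semisimple_block k m (X1 X2 : 'M[F]_k) (Y1 Y2 : 'M[F]_m) :
  semisimple [:: X1; X2] -> semisimple [:: Y1; Y2] ->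
  semisimple [:: block_mx X1 0 0 Y1; block_mx X2 0 0 Y2].
Proof.
move=> ssX ssY U.
set T1 : 'M[F]_(k, k + m) := row_mx 1%:M 0.
set T2 : 'M[F]_(m, k + m) := row_mx 0 1%:M.
set P1 : 'M[F]_(k + m, k) := col_mx 1%:M 0.
set P2 : 'M[F]_(k + m, m) := col_mx 0 1%:M.
have hT1 (X : 'M_k) (Y : 'M_m) : T1 *m (block_mx X 0 0 Y)^T = X^T *m T1.
  by rewrite tr_block_mx !trmx0 /T1 mul_row_block mul_mx_row ?mulmx0 ?mul1mx ?mul0mx ?addr0 ?add0r mulmx1.
have hP2 (X : 'M_k) (Y : 'M_m) : (block_mx X 0 0 Y)^T *m P2 = P2 *m Y^T.
  by rewrite tr_block_mx !trmx0 /P2 mul_block_col mul_col_mx ?mulmx0 ?mul1mx ?mul0mx ?addr0 ?add0r mulmx1.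
have fT1 : row_free T1.
  apply/eqnP/eqP; rewrite eqn_leq rank_leq_row /=.
  have e : \rank (T1 *m P1) = k by rewrite /T1 /P1 mul_row_col mulmx0 addr0 mulmx1 mxrank1.
  by apply: leq_trans (mxrankM_maxl T1 P1); rewrite e.
rewrite !inv2E => /andP [u1 u2].
set K := (U :&: T1)%MS.
have sKT : (K <= T1)%MS by apply: capmxSr.
have iK (X : 'M_k) (Y : 'M_m) : (U *m (block_mx X 0 0 Y)^T <= U)%MS ->
     (K *m (block_mx X 0 0 Y)^T <= K)%MS.
  move=> hU; rewrite sub_capmx; apply/andP; split.
    by apply: submx_trans hU; apply: submxMr; apply: capmxSl.
  apply: submx_trans (stab_inter (hT1 X Y)); apply: submxMr; apply: capmxSr.
set K1 := <<K *m pinvmx T1>>%MS.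
have iK1 : invariant [:: X1; X2] K1.
  rewrite inv2E; apply/andP; split.
    by apply: (pull_inv fT1 (hT1 X1 Y1) sKT); apply: iK.
  by apply: (pull_inv fT1 (hT1 X2 Y2) sKT); apply: iK.
set U2 := <<U *m P2>>%MS.
have iU2 : invariant [:: Y1; Y2] U2.
  rewrite inv2E !(eqmxMr _ (genmxE _)) !genmxE -!mulmxA -(hP2 X1 Y1) -(hP2 X2 Y2) !mulmxA.
  by rewrite !submxMr.
have [W1 [iW1 [cW1 sW1]]] := ssX _ iK1.
have [W2 [iW2 [cW2 sW2]]] := ssY _ iU2.
move: iW1 iW2; rewrite !inv2E => /andP [w11 w12] /andP [w21 w22].
set W := block_mx W1 0 0 W2.
have rW : \rank W = (\rank W1 + \rank W2)%N by rewrite rank_diag_block_mx.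
have W1T : W1 *m T1 = T1 *m W.
  by rewrite /T1 /W mul_row_block mul_mx_row ?mulmx0 ?mul0mx ?mul1mx ?addr0 ?add0r mulmx1.
have W2T : W2 *m T2 = T2 *m W.
  by rewrite /T2 /W mul_row_block mul_mx_row ?mulmx0 ?mul0mx ?mul1mx ?addr0 ?add0r mulmx1.
have sT1 : (T1 <= U + W)%MS.
  have -> : T1 = 1%:M *m T1 by rewrite mul1mx.
  apply: submx_trans (submxMr T1 (submx_trans (submx1 _) (proj2 (andP sW1)))) _.
  rewrite (addsmxMr K1 W1 T1); apply: addsmxS.
    by rewrite (pull_eq sKT) capmxSl.
  by rewrite W1T submxMl.
have sT2 : (T2 <= U + W)%MS.
  have -> : T2 = 1%:M *m T2 by rewrite mul1mx.
  apply: submx_trans (submxMr T2 (submx_trans (submx1 _) (proj2 (andP sW2)))) _.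
  rewrite (addsmxMr U2 W2 T2) (adds_eqmx (eqmxMr _ (genmxE _)) (eqmx_refl _)).
  rewrite addsmx_sub; apply/andP; split; last first.
    by rewrite W2T; apply: submx_trans (submxMl _ _) (addsmxSr _ _).
  have -> : U *m P2 *m T2 = U - U *m P1 *m T1.
    have e : P1 *m T1 + P2 *m T2 = 1%:M.
      rewrite /P1 /P2 /T1 /T2 !mul_col_mx !mul_mx_row ?mul1mx ?mul0mx.
      rewrite add_col_mx !add_row_mx ?addr0 ?add0r.
      by symmetry; rewrite (scalar_mx_block k m).
    apply/eqP; rewrite eq_sym subr_eq -!mulmxA -mulmxDr addrC e mulmx1 //.
  apply: addmx_sub; first exact: addsmxSl.
  by rewrite -mulNmx; apply: submx_trans (submxMl _ _) sT1.
have fUW : (U + W == 1%:M)%MS.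
  rewrite full_mx -sub1mx.
  have -> : (1%:M : 'M_(k + m)) = col_mx T1 T2 by rewrite /T1 /T2 (scalar_mx_block k m).
  by rewrite col_mx_sub sT1 sT2.
exists W; split.
  rewrite inv2E; apply/andP; split; rewrite /W tr_block_mx ?trmx0 mulmx_block
    ?mulmx0 ?mul0mx ?addr0 ?add0r; by apply: submx_diag.
split => //.
have rP2 : \rank P2 = m.
  apply/eqP; rewrite eqn_leq rank_leq_col /=.
  have e : \rank (T2 *m P2) = m.
    by rewrite /T2 /P2 mul_row_col ?mulmx0 ?mul0mx ?add0r ?mulmx1 mxrank1.
  by apply: leq_trans (mxrankM_maxr T2 P2); rewrite e.
have kP2 : (T1 :=: kermx P2)%MS.
  apply/eqmxP; rewrite -(mxrank_leqif_eq _).2.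
    by rewrite mxrank_ker rP2 addnK; case/eqnP: fT1 => ->.
  by apply/sub_kermxP; rewrite /T1 /P2 mul_row_col ?mulmx0 ?mul0mx ?add0r ?addr0.
have rU : \rank U = (\rank (U *m P2) + \rank K)%N.
  by rewrite -(mxrank_mul_ker U P2) /K (cap_eqmx (eqmx_refl U) kP2).
have rK1 : \rank K1 = \rank K by rewrite -(mxrankMfree _ fT1) (pull_eq sKT).
have rU2 : \rank U2 = \rank (U *m P2) by rewrite genmxE.
have c1 := rank_compl cW1 sW1.
have c2 := rank_compl cW2 sW2.
have := mxrank_sum_cap U W.
move: fUW; rewrite full_mx => /eqnP ->.
rewrite rW rU -rK1 -rU2 => e.
rewrite eq0_mx -mxrank_eq0; apply/eqP.
move: e; rewrite (addnC (\rank U2)) addnACA c1 c2 => /eqP.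
by rewrite -[X in _ == X]addn0 eqn_add2l => /eqP.
Qed.
End Gen3.

Section Gen4.
Variable F : fieldType.

Lemma exists_base k n (U : 'M[F]_n) : \rank U = k -> exists Ub : 'M_(k, n), (Ub :=: U)%MS.
Proof. by move=> <-; exists (row_base U); apply: eq_row_base. Qed.

Lemma conj_block k m (Q : 'M[F]_(k + m)) (M : 'M_(k + m)) (X : 'M_k) (Y : 'M_m) :
  Q \in unitmx -> Q *m M^T = block_mx X 0 0 Y *m Q ->
  invmx Q^T *m M *m invmx (invmx Q^T) = block_mx X^T 0 0 Y^T.
Proof.
move=> uQ e; rewrite invmxK.
have e' : M *m Q^T = Q^T *m (block_mx X 0 0 Y)^T by rewrite -trmx_mul -e trmx_mul trmxK.
rewrite -mulmxA e' mulmxA mulVmx ?unitmx_tr // mul1mx tr_block_mx !trmx0 //.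
Qed.

Lemma decomp k m (M1 M2 U V : 'M[F]_(k + m.+1)) :
  invariant [:: M1; M2] U -> invariant [:: M1; M2] V ->
  (U :&: V == (0 : 'M_(k + m.+1)))%MS -> (U + V == 1%:M)%MS ->
  \rank U = k -> \rank V = m.+1 ->
  exists (P : 'M_(k + m.+1)) (X1 X2 : 'M_k) (Y1 Y2 : 'M_m.+1),
    [/\ \det P = 1, P \in unitmx, P *m M1 *m invmx P = block_mx X1 0 0 Y1
      & P *m M2 *m invmx P = block_mx X2 0 0 Y2].
Proof.
rewrite !inv2E => /andP [u1 u2] /andP [v1 v2] cUV sUV rUk rVm.
have [Ub eU] := exists_base rUk.
have [Vb eV] := exists_base rVm.
set Q0 := col_mx Ub Vb.
have uQ0 : Q0 \in unitmx.
  rewrite -row_full_unit /row_full /Q0 -(addsmxE Ub Vb) (adds_eqmx eU eV).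
  by move: sUV; rewrite full_mx.
set d := \det Q0.
have d0 : d != 0 by rewrite -unitfE -unitmxE.
set Dv : 'M[F]_m.+1 := diag_mx (\row_(i < m.+1) (if i == ord0 then d^-1 else 1)).
have dDv : \det Dv = d^-1.
  rewrite det_diag big_ord_recl mxE eqxx big1 ?mulr1 // => i _.
  by rewrite mxE eq_sym (negbTE (neq_lift _ _)).
have uDv : Dv \in unitmx by rewrite unitmxE dDv unitfE invr_eq0.
set Vb' := Dv *m Vb.
have eV' : (Vb' :=: V)%MS.
  by apply: eqmx_trans (eqmxMfull _ _) eV; rewrite row_full_unit.
set Q := col_mx Ub Vb'.
have eQ : Q = block_mx 1%:M 0 0 Dv *m Q0.
  by rewrite /Q /Q0 mul_block_col !mul1mx !mul0mx addr0 add0r.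
have dQ : \det Q = 1 by rewrite eQ det_mulmx det_ublock det1 mul1r dDv mulVf.
have uQ : Q \in unitmx by rewrite unitmxE dQ unitr1.
have hM (M : 'M_(k + m.+1)) : (U *m M^T <= U)%MS -> (V *m M^T <= V)%MS ->
    exists X Y, Q *m M^T = block_mx X 0 0 Y *m Q.
  move=> hU hV.
  have : (Ub *m M^T <= Ub)%MS by rewrite (eqmxMr _ eU) eU.
  case/submxP => X eX.
  have : (Vb' *m M^T <= Vb')%MS by rewrite (eqmxMr _ eV') eV'.
  case/submxP => Y eY.
  exists X, Y.
  by rewrite /Q mul_col_mx mul_block_col eX eY !mul0mx addr0 add0r.
have [X1 [Y1 e1]] := hM M1 u1 v1.
have [X2 [Y2 e2]] := hM M2 u2 v2.
exists (invmx Q^T), X1^T, X2^T, Y1^T, Y2^T; split.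
- by rewrite det_inv det_tr dQ invr1.
- by rewrite unitmx_inv unitmx_tr.
- exact: conj_block.
- exact: conj_block.
Qed.
End Gen4.

Section Cplx.
Variable R : realType.
Local Notation C := R[i].
Local Notation Re := (@complex.Re R).
Local Notation Im := (@complex.Im R).
Definition cmx m n (M : 'M[R]_(m, n)) : 'M[C]_(m, n) := map_mx (real_complex R) M.

Lemma Re_add (a b : C) : Re (a + b) = Re a + Re b.
Proof. by case: a; case: b. Qed.
Lemma Im_add (a b : C) : Im (a + b) = Im a + Im b.
Proof. by case: a; case: b. Qed.
Lemma Re_mulr (z : C) (r : R) : Re (z * (real_complex R r)) = Re z * r.
Proof. case: z => a b /=. rewrite mulr0 subr0 //. Qed.
Lemma Im_mulr (z : C) (r : R) : Im (z * (real_complex R r)) = Im z * r.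
Proof. case: z => a b /=. rewrite mulr0 add0r //. Qed.
Lemma Re_mul (l z : C) : Re (l * z) = Re l * Re z - Im l * Im z.
Proof. by case: l; case: z. Qed.
Lemma Im_mul (l z : C) : Im (l * z) = Re l * Im z + Im l * Re z.
Proof. by case: l; case: z. Qed.

Lemma Re_sum I (r : seq I) (P : pred I) (f : I -> C) :
  Re (\sum_(i <- r | P i) f i) = \sum_(i <- r | P i) Re (f i).
Proof. by apply: (big_morph Re Re_add). Qed.
Lemma Im_sum I (r : seq I) (P : pred I) (f : I -> C) :
  Im (\sum_(i <- r | P i) f i) = \sum_(i <- r | P i) Im (f i).
Proof. by apply: (big_morph Im Im_add). Qed.

Definition rot2 (l : C) : 'M[R]_(1 + 1) :=
  block_mx (Re l)%:M (- Im l)%:M (Im l)%:M (Re l)%:M.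

Lemma realify n (M : 'M[R]_n) (x : 'rV[C]_n) (l : C) :
  x *m cmx M = l *: x ->
  col_mx (map_mx Re x) (map_mx Im x) *m M = rot2 l *m col_mx (map_mx Re x) (map_mx Im x).
Proof.
move=> e.
have eR : map_mx Re x *m M = Re l *: map_mx Re x - Im l *: map_mx Im x.
  apply/matrixP => i j; rewrite !mxE.
  have := congr1 Re (congr1 (fun A : 'M[C]_(1, n) => A i j) e); rewrite !mxE Re_sum Re_mul => <-.
  by apply: eq_bigr => k _; rewrite !mxE Re_mulr.
have eI : map_mx Im x *m M = Im l *: map_mx Re x + Re l *: map_mx Im x.
  apply/matrixP => i j; rewrite !mxE [RHS]addrC.
  have := congr1 Im (congr1 (fun A : 'M[C]_(1, n) => A i j) e); rewrite !mxE Im_sum Im_mul => <-.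
  by apply: eq_bigr => k _; rewrite !mxE Im_mulr.
rewrite mul_col_mx eR eI /rot2 mul_block_col !mul_scalar_mx.
by rewrite scaleNr.
Qed.

Lemma realify_nz n (x : 'rV[C]_n) : x != 0 -> col_mx (map_mx Re x) (map_mx Im x) != 0.
Proof.
apply: contra; rewrite col_mx_eq0 => /andP [/eqP h1 /eqP h2].
apply/eqP/matrixP => i j.
have := congr1 (fun A : 'M[R]_(1, n) => A i j) h1; have := congr1 (fun A : 'M[R]_(1, n) => A i j) h2.
rewrite !mxE; case: (x i j) => a b /= -> ->; done.
Qed.
End Cplx.

Lemma rearr (V : zmodType) (x a1 a2 a3 b1 b2 b3 : V) :
  (x + a1 + b1) + (x + a2 + b2) + (x + a3 + b3) = (x + x + x) + (a1 + a2 + a3) + (b1 + b2 + b3).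
Proof.
by rewrite [X in X + _ = _]addrACA [x + a1 + (x + a2)]addrACA [LHS]addrACA [_ + (x + a3)]addrACA.
Qed.
Lemma tel (V : zmodType) (a b c : V) : a - c + (b - a) + (c - b) = 0.
Proof. by rewrite [a - c + _]addrC subrKA subrKA subrr. Qed.

Section Span.
Variable K : fieldType.

Lemma P_ker n (Z : 'M[K]_n) : Z *m Z *m Z = 1%:M ->
  ((1%:M + Z + Z *m Z)%R <= kermx (Z - 1%:M))%MS.
Proof.
move=> Z3; apply/sub_kermxP.
by rewrite !mulmxDl !mulmxBr !mul1mx !mulmx1 Z3 tel.
Qed.

Lemma cube_scale n (c : K) (A : 'M[K]_n) : c ^+ 3 = 1 -> A *m A *m A = 1%:M ->
  (c *: A) *m (c *: A) *m (c *: A) = 1%:M.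
Proof.
move=> c3 A3.
by rewrite -!scalemxAl -!scalemxAr -?scalemxAl -?scalemxAr !scalerA A3 -!expr2 -?exprS -?exprSr c3 scale1r.
Qed.

Lemma span3 (w : K) n (A : 'M[K]_n) :
  w ^+ 2 + w + 1 = 0 -> (3%:R : K) != 0 -> A *m A *m A = 1%:M ->
  (n <= \rank (kermx (w ^+ 0 *: A - 1%:M)) + \rank (kermx (w ^+ 1 *: A - 1%:M))
        + \rank (kermx (w ^+ 2 *: A - 1%:M)))%N.
Proof.
move=> wq n3 A3.
have w3 : w ^+ 3 = 1.
  have h : w ^+ 3 - 1 = (w - 1) * (w ^+ 2 + w + 1) by ring.
  by apply/eqP; rewrite -subr_eq0 h wq mulr0.
have c3 i : (w ^+ i) ^+ 3 = 1 by rewrite -exprM mulnC exprM w3 expr1n.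
pose P (i : nat) := 1%:M + w ^+ i *: A + (w ^+ i *: A) *m (w ^+ i *: A).
have hP i : (P i <= kermx (w ^+ i *: A - 1%:M))%MS.
  by apply: P_ker; apply: cube_scale.
have eP : P 0%N + P 1%N + P 2%N = 3%:R%:M.
  rewrite /P rearr -!scalerDl -!scalemxAl -!scalemxAr -?scalemxAl !scalerA -!scalerDl.
  have -> : w ^+ 0 + w ^+ 1 + w ^+ 2 = 0.
    have h : w ^+ 0 + w ^+ 1 + w ^+ 2 = w ^+ 2 + w + 1 by ring.
    by rewrite h.
  have -> : w ^+ 0 * w ^+ 0 + w ^+ 1 * w ^+ 1 + w ^+ 2 * w ^+ 2 = 0.
    have h : w ^+ 0 * w ^+ 0 + w ^+ 1 * w ^+ 1 + w ^+ 2 * w ^+ 2 = w ^+ 2 + w ^+ 3 * w + 1 by ring.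
    by rewrite h w3 mul1r.
  rewrite !scale0r !addr0; apply/matrixP => i j; rewrite !mxE; case: (i == j); rewrite ?mulr0n ?addr0 // !mulr1n -!natr1 //=; ring.
have s1 : (1%:M <= P 0%N + P 1%N + P 2%N)%MS.
  have -> : (1%:M : 'M[K]_n) = (3%:R)^-1 *: (P 0%N + P 1%N + P 2%N).
    by rewrite eP scale_scalar_mx mulVf.
  by apply: scalemx_sub; apply: addmx_sub_adds; first apply: addmx_sub_adds; apply: submx_refl.
have := mxrankS s1; rewrite mxrank1 => h.
apply: (leq_trans h).
apply: leq_trans (mxrank_adds_leqif _ _).1 _.
apply: leq_add; last exact: mxrankS.
apply: leq_trans (mxrank_adds_leqif _ _).1 _.
by apply: leq_add; exact: mxrankS.
Qed.
End Span.

Lemma comb (a b c : nat -> nat) :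
  (4 <= a 0 + a 1 + a 2)%N -> (4 <= b 0 + b 1 + b 2)%N -> (4 <= c 0 + c 1 + c 2)%N ->
  c 3%N = c 0%N -> c 4%N = c 1%N ->
  exists i j : nat, (4 < a i + b j + c (i + j))%N.
Proof.
move=> ha hb hc c3 c4.
case: (ltnP 4 (a 0 + b 0 + c (0 + 0)))%N => h00; first by exists 0%N, 0%N.
case: (ltnP 4 (a 0 + b 1 + c (0 + 1)))%N => h01; first by exists 0%N, 1%N.
case: (ltnP 4 (a 0 + b 2 + c (0 + 2)))%N => h02; first by exists 0%N, 2%N.
case: (ltnP 4 (a 1 + b 0 + c (1 + 0)))%N => h10; first by exists 1%N, 0%N.
case: (ltnP 4 (a 1 + b 1 + c (1 + 1)))%N => h11; first by exists 1%N, 1%N.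
case: (ltnP 4 (a 1 + b 2 + c (1 + 2)))%N => h12; first by exists 1%N, 2%N.
case: (ltnP 4 (a 2 + b 0 + c (2 + 0)))%N => h20; first by exists 2%N, 0%N.
case: (ltnP 4 (a 2 + b 1 + c (2 + 1)))%N => h21; first by exists 2%N, 1%N.
case: (ltnP 4 (a 2 + b 2 + c (2 + 2)))%N => h22; first by exists 2%N, 2%N.
exfalso; move: h00 h01 h02 h10 h11 h12 h20 h21 h22 => /=.
rewrite c3 c4.
move: ha hb hc.
move: (a 0%N) (a 1%N) (a 2%N) (b 0%N) (b 1%N) (b 2%N) (c 0%N) (c 1%N) (c 2%N).
move=> ? ? ? ? ? ? ? ? ?.
lia.
Qed.

Section Om.
Variable R : realType.
Local Notation C := R[i].
Local Notation Re := (@complex.Re R).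
Local Notation Im := (@complex.Im R).

Lemma sq_comp (z : C) : z ^+ 2 + z + 1 =
  complex.Complex (Re z * Re z - Im z * Im z + Re z + 1) (Re z * Im z + Im z * Re z + Im z).
Proof. by case: z => a b; rewrite expr2 /=; congr complex.Complex; rewrite addr0. Qed.

Definition omega : C := complex.Complex (- (2%:R)^-1) (Num.sqrt 3%:R / 2%:R).

Lemma omegaE : omega ^+ 2 + omega + 1 = 0.
Proof.
rewrite sq_comp /omega /=.
set s := Num.sqrt (3%:R : R).
have s2 : s * s = 3%:R by rewrite -expr2 sqr_sqrtr // ler0n.
have h2 : (2%:R : R) != 0 by rewrite pnatr_eq0.
congr complex.Complex.
  have -> : - 2%:R^-1 * - 2%:R^-1 - s / 2%:R * (s / 2%:R) + - 2%:R^-1 + 1 =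
    (3%:R - s * s) / 4%:R :> R by field.
  by rewrite s2 subrr mul0r.
by field.
Qed.

Lemma three_nz : (3%:R : C) != 0.
Proof. by rewrite pnatr_eq0. Qed.

Lemma omega3 : omega ^+ 3 = 1.
Proof.
have h : omega ^+ 3 - 1 = (omega - 1) * (omega ^+ 2 + omega + 1) by ring.
by apply/eqP; rewrite -subr_eq0 h omegaE mulr0.
Qed.

Lemma tr_cube n (M : 'M[R]_n) : cube M = 1%:M -> M^T *m M^T *m M^T = 1%:M.
Proof. by rewrite /cube => h; rewrite -mulmxA -!trmx_mul h trmx1. Qed.

Lemma unscale_r n (c : C) (M : 'M[C]_n) (x : 'rV[C]_n) : c != 0 -> x *m (c *: M) = x ->
  x *m M = c^-1 *: x.
Proof. by move=> c0 e; rewrite -[x in RHS]e -scalemxAr scalerA mulVf ?scale1r. Qed.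

Lemma unscale_l n (c : C) (M : 'M[C]_n) (y : 'cV[C]_n) : c != 0 -> (c *: M) *m y = y ->
  y^T *m M^T = c^-1 *: y^T.
Proof.
move=> c0 e; rewrite -trmx_mul -[y in RHS]e -scalemxAl.
have -> : (c *: (M *m y))^T = c *: (M *m y)^T by apply/matrixP => a b; rewrite !mxE.
by rewrite scalerA mulVf ?scale1r.
Qed.

Lemma exists_inv (A B : 'M[R]_4) : cube A = 1%:M -> cube B = 1%:M -> cube (A *m B) = 1%:M ->
  exists U : 'M[R]_4, invariant [:: A; B] U /\ (0 < \rank U)%N /\ (\rank U < 4)%N.
Proof.
move=> hA hB hAB.
set Ar := A^T; set Br := B^T.
have hAr := tr_cube hA; have hBr := tr_cube hB.
have hBA : (Br *m Ar) *m (Br *m Ar) *m (Br *m Ar) = 1%:M.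
  by rewrite /Br /Ar -trmx_mul; apply: tr_cube.
set Ac := cmx Ar; set Bc := cmx Br.
have cM (M : 'M[R]_4) : M *m M *m M = 1%:M -> cmx M *m cmx M *m cmx M = 1%:M.
  by move=> h; rewrite /cmx -!map_mxM h map_mx1.
have hAc := cM _ hAr; have hBc := cM _ hBr.
have hBAc : (Bc *m Ac) *m (Bc *m Ac) *m (Bc *m Ac) = 1%:M.
  by rewrite /Bc /Ac /cmx -map_mxM; apply: cM.
set w := omega.
pose fa i := \rank (kermx (w ^+ i *: Ac - 1%:M)).
pose fb i := \rank (kermx (w ^+ i *: Bc - 1%:M)).
pose fc i := \rank (kermx (w ^+ i *: (Bc *m Ac) - 1%:M)).
have sa : (4 <= fa 0 + fa 1 + fa 2)%N := span3 omegaE three_nz hAc.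
have sb : (4 <= fb 0 + fb 1 + fb 2)%N := span3 omegaE three_nz hBc.
have sc : (4 <= fc 0 + fc 1 + fc 2)%N := span3 omegaE three_nz hBAc.
have c3 : fc 3%N = fc 0%N by rewrite /fc omega3 expr0.
have c4 : fc 4%N = fc 1%N by rewrite /fc (exprSr w 3) omega3 mul1r expr1.
have [i [j hij]] := comb sa sb sc c3 c4.
have wi3 (k : nat) : (w ^+ k) ^+ 3 = 1 by rewrite -exprM mulnC exprM omega3 expr1n.
have wnz (k : nat) : w ^+ k != 0.
  by apply/eqP => h; have := wi3 k; rewrite h expr0n /= => /eqP; rewrite eq_sym oner_eq0.
have eBA : w ^+ j *: Bc *m (w ^+ i *: Ac) = w ^+ (i + j) *: (Bc *m Ac).
  by rewrite -scalemxAl -scalemxAr scalerA -exprD addnC.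
have := @fix_count _ 4 (w ^+ i *: Ac) (w ^+ j *: Bc) (cube_scale (wi3 i) hAc).
rewrite eBA => /(_ hij).
case => [[x [x0 [xA xB]]] | [y [y0 [yA yB]]]].
  move/(unscale_r (wnz i)): xA => xA; move/(unscale_r (wnz j)): xB => xB.
  exists <<col_mx (map_mx Re x) (map_mx Im x)>>%MS; split; last split.
  - rewrite inv2E !(eqmxMr _ (genmxE _)) !genmxE.
    by rewrite (realify xA) (realify xB) !submxMl.
  - by rewrite genmxE lt0n mxrank_eq0 realify_nz.
  - by rewrite genmxE; apply: leq_ltn_trans (rank_leq_row _) _.
move/(unscale_l (wnz i)): yA => yA; move/(unscale_l (wnz j)): yB => yB.
have eA : Ac^T = cmx A by rewrite /Ac /cmx map_trmx trmxK.
have eB : Bc^T = cmx B by rewrite /Bc /cmx map_trmx trmxK.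
rewrite eA in yA; rewrite eB in yB.
set Y := col_mx (map_mx Re y^T) (map_mx Im y^T).
have Y0 : Y != 0 by apply: realify_nz; rewrite trmx_eq0.
exists (kermx Y^T); split; last split.
- rewrite inv2E; apply/andP; split; apply/sub_kermxP.
    by rewrite -mulmxA -trmx_mul (realify yA) trmx_mul mulmxA mulmx_ker mul0mx.
  by rewrite -mulmxA -trmx_mul (realify yB) trmx_mul mulmxA mulmx_ker mul0mx.
- rewrite mxrank_ker mxrank_tr subn_gt0.
  by apply: leq_ltn_trans (rank_leq_row _) _.
- by rewrite mxrank_ker mxrank_tr ltn_subrL lt0n mxrank_eq0 Y0.
Qed.
End Om.

Section Fin.
Variable R : realFieldType.

Lemma real_cube1 (x : R) : x ^+ 3 = 1 -> x = 1.
Proof.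
move=> h.
have e : (x - 1) * (x ^+ 2 + x + 1) = 0.
  have -> : (x - 1) * (x ^+ 2 + x + 1) = x ^+ 3 - 1 by ring.
  by rewrite h subrr.
have pos : x ^+ 2 + x + 1 != 0.
  rewrite lt0r_neq0 //.
  have -> : x ^+ 2 + x + 1 = (x + 2^-1) ^+ 2 + 3%:R / 4%:R by field.
  by rewrite ltr_wpDl ?sqr_ge0 // divr_gt0 ?ltr0n.
by move: e => /eqP; rewrite mulf_eq0 (negbTE pos) orbF subr_eq0 => /eqP.
Qed.

Lemma det_cube n (M : 'M[R]_n) : cube M = 1%:M -> \det M = 1.
Proof.
move=> h; apply: real_cube1.
by rewrite -(det1 R n) -h /cube !det_mulmx -!expr2 -exprSr.
Qed.

Lemma cube_conj n (P M : 'M[R]_n) : P \in unitmx ->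
  cube (P *m M *m invmx P) = P *m cube M *m invmx P.
Proof.
move=> uP; rewrite /cube.
by rewrite !mulmxA !(mulmxKV uP).
Qed.

Lemma rep_conj n (P A B : 'M[R]_n) : P \in unitmx -> rep_SL A B ->
  rep_SL (P *m A *m invmx P) (P *m B *m invmx P).
Proof.
move=> uP [dA dB cA cB cAB].
have dP : \det P * \det (invmx P) = 1.
  by rewrite -det_mulmx mulmxV // det1.
have c1 M : cube M = 1%:M -> cube (P *m M *m invmx P) = 1%:M.
  by move=> h; rewrite cube_conj // h mulmx1 mulmxV.
split.
- by rewrite !det_mulmx dA mulr1.
- by rewrite !det_mulmx dB mulr1.
- exact: c1.
- exact: c1.
- have -> : P *m A *m invmx P *m (P *m B *m invmx P) = P *m (A *m B) *m invmx P.
    by rewrite !mulmxA (mulmxKV uP).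
  exact: c1.
Qed.

Lemma ss_conj n (P A B : 'M[R]_n) : P \in unitmx -> semisimple [:: A; B] ->
  semisimple [:: P *m A *m invmx P; P *m B *m invmx P].
Proof.
move=> uP; apply: (@semisimple_sub _ n n (invmx P)^T).
- by rewrite /row_free mxrank_tr mxrank_unit ?unitmx_inv.
- by rewrite -!trmx_mul; congr (_^T); rewrite !mulmxA mulVmx // mul1mx.
- by rewrite -!trmx_mul; congr (_^T); rewrite !mulmxA mulVmx // mul1mx.
Qed.

Lemma cube_block k m (X : 'M[R]_k) (Y : 'M[R]_m) :
  cube (block_mx X 0 0 Y) = block_mx (cube X) 0 0 (cube Y).
Proof. by rewrite /cube !mulmx_block ?mulmx0 ?mul0mx ?addr0 ?add0r ?mulmx0 ?mul0mx ?addr0 ?add0r. Qed.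

Lemma mul_diag k m (X1 X2 : 'M[R]_k) (Y1 Y2 : 'M[R]_m) :
  block_mx X1 0 0 Y1 *m block_mx X2 0 0 Y2 = block_mx (X1 *m X2) 0 0 (Y1 *m Y2).
Proof. by rewrite mulmx_block ?mulmx0 ?mul0mx ?addr0 ?add0r. Qed.

Lemma block1 k m (X : 'M[R]_k) (Y : 'M[R]_m) :
  block_mx X 0 0 Y = 1%:M -> X = 1%:M /\ Y = 1%:M.
Proof. by rewrite (scalar_mx_block k m) => /eq_block_mx [-> _ _ ->]. Qed.

Lemma rep_block k m (X1 X2 : 'M[R]_k) (Y1 Y2 : 'M[R]_m) :
  rep_SL (block_mx X1 0 0 Y1) (block_mx X2 0 0 Y2) -> rep_SL X1 X2 /\ rep_SL Y1 Y2.
Proof.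
case=> _ _; rewrite mul_diag !cube_block.
move=> /block1 [c1 d1] /block1 [c2 d2] /block1 [c3 d3].
by split; split => //; apply: det_cube.
Qed.

Lemma block_rep k m (X1 X2 : 'M[R]_k) (Y1 Y2 : 'M[R]_m) :
  rep_SL X1 X2 -> rep_SL Y1 Y2 -> rep_SL (block_mx X1 0 0 Y1) (block_mx X2 0 0 Y2).
Proof.
case=> dX1 dX2 cX1 cX2 cX; case=> dY1 dY2 cY1 cY2 cY.
split; rewrite ?mul_diag ?cube_block ?det_ublock ?dX1 ?dX2 ?dY1 ?dY2 ?mulr1 //.
- by rewrite cX1 cY1 -scalar_mx_block.
- by rewrite cX2 cY2 -scalar_mx_block.
- by rewrite cX cY -scalar_mx_block.
Qed.

Lemma ss_block_l k m (X1 X2 : 'M[R]_k) (Y1 Y2 : 'M[R]_m) :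
  semisimple [:: block_mx X1 0 0 Y1; block_mx X2 0 0 Y2] -> semisimple [:: X1; X2].
Proof.
have h (X : 'M[R]_k) (Y : 'M[R]_m) :
    (row_mx 1%:M 0 : 'M_(k, k + m)) *m (block_mx X 0 0 Y)^T = X^T *m row_mx 1%:M 0.
  by rewrite tr_block_mx !trmx0 mul_row_block mul_mx_row !mulmx0 !mul1mx !mul0mx !addr0 mulmx1.
apply: semisimple_sub (h _ _) (h _ _).
apply/eqnP/eqP; rewrite eqn_leq rank_leq_row /=.
have e : \rank ((row_mx 1%:M 0 : 'M[R]_(k, k + m)) *m col_mx 1%:M 0) = k.
  by rewrite mul_row_col mulmx0 addr0 mulmx1 mxrank1.
by apply: leq_trans (mxrankM_maxl (row_mx 1%:M 0 : 'M[R]_(k, k + m)) (col_mx 1%:M 0 : 'M[R]_(k + m, k))); rewrite e.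
Qed.

Lemma ss_block_r k m (X1 X2 : 'M[R]_k) (Y1 Y2 : 'M[R]_m) :
  semisimple [:: block_mx X1 0 0 Y1; block_mx X2 0 0 Y2] -> semisimple [:: Y1; Y2].
Proof.
have h (X : 'M[R]_k) (Y : 'M[R]_m) :
    (row_mx 0 1%:M : 'M_(m, k + m)) *m (block_mx X 0 0 Y)^T = Y^T *m row_mx 0 1%:M.
  by rewrite tr_block_mx !trmx0 mul_row_block mul_mx_row !mulmx0 !mul1mx !mul0mx !add0r mulmx1.
apply: semisimple_sub (h _ _) (h _ _).
apply/eqnP/eqP; rewrite eqn_leq rank_leq_row /=.
have e : \rank ((row_mx 0 1%:M : 'M[R]_(m, k + m)) *m col_mx 0 1%:M) = m.
  by rewrite mul_row_col mulmx0 add0r mulmx1 mxrank1.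
by apply: leq_trans (mxrankM_maxl (row_mx 0 1%:M : 'M[R]_(m, k + m)) (col_mx 0 1%:M : 'M[R]_(k + m, m))); rewrite e.
Qed.

Lemma ss_id n : semisimple [:: (1%:M : 'M[R]_n); 1%:M].
Proof.
move=> U _; exists (U^C)%MS; split.
  by rewrite inv2E trmx1 !mulmx1 submx_refl.
split.
  by rewrite capmx_compl eq0_mx.
by rewrite full_mx addsmx_compl_full.
Qed.

Lemma one_block (Y : 'M[R]_1) : cube Y = 1%:M -> Y = 1%:M.
Proof.
move=> h; rewrite [Y]mx11_scalar; congr (_%:M); apply: real_cube1.
have := congr1 (fun M : 'M[R]_1 => M 0 0) h.
rewrite /cube [Y]mx11_scalar -!scalar_mxM !mxE /= !mulr1n => <-.
by rewrite -!expr2 -exprSr.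
Qed.
End Fin.

Theorem proposition4p4 (R : realType) :
  (* every semisimple rho : Gamma -> SL_4 R preserves a line or a plane, and is
     SL_4-conjugate to i_* rho' or to j_* (rho1, rho2) with semisimple factors *)
  (forall A B : 'M[R]_4, rep_SL A B -> semisimple [:: A; B] ->
     (exists U : 'M[R]_4,
        ((\rank U = 1)%N \/ (\rank U = 2)%N) /\ invariant [:: A; B] U) /\
     ((exists (P : 'M[R]_4) (A3 B3 : 'M[R]_3),
         [/\ \det P = 1, rep_SL A3 B3, semisimple [:: A3; B3],
             P *m A *m invmx P = incl_i A3 & P *m B *m invmx P = incl_i B3])
      \/
      (exists (P : 'M[R]_4) (A1 B1 A2 B2 : 'M[R]_2),
         [/\ \det P = 1, rep_SL A1 B1 /\ semisimple [:: A1; B1],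
             rep_SL A2 B2 /\ semisimple [:: A2; B2],
             P *m A *m invmx P = incl_j A1 A2 & P *m B *m invmx P = incl_j B1 B2])))
  /\
  (* reverse inclusion of the displayed equality: i_* and j_* of semisimple
     representations are semisimple representations into SL_4 R *)
  (forall A3 B3 : 'M[R]_3, rep_SL A3 B3 -> semisimple [:: A3; B3] ->
     rep_SL (incl_i A3) (incl_i B3) /\ semisimple [:: incl_i A3; incl_i B3])
  /\
  (forall A1 B1 A2 B2 : 'M[R]_2,
     rep_SL A1 B1 -> semisimple [:: A1; B1] ->
     rep_SL A2 B2 -> semisimple [:: A2; B2] ->
     rep_SL (incl_j A1 A2) (incl_j B1 B2) /\
     semisimple [:: incl_j A1 A2; incl_j B1 B2]).
Proof.
have rep1 : rep_SL (1%:M : 'M[R]_1) 1%:M.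
  by split; rewrite ?det1 /cube ?mulmx1.
split; last split.
- move=> A B hrep hss.
  have [dA dB cA cB cAB] := hrep.
  have [U [iU [rU0 rU4]]] := exists_inv cA cB cAB.
  have [V [iV [cUV sUV]]] := hss U iU.
  have rUV := rank_compl cUV sUV.
  have cVU : (V :&: U == (0 : 'M_4))%MS by rewrite capmxC.
  have sVU : (V + U == 1%:M)%MS by rewrite addsmxC.
  have fin_i (P : 'M[R]_4) (X1 X2 : 'M[R]_3) (Y1 Y2 : 'M[R]_1) :
      \det P = 1 -> P \in unitmx -> P *m A *m invmx P = block_mx X1 0 0 Y1 ->
      P *m B *m invmx P = block_mx X2 0 0 Y2 ->
      exists (P : 'M[R]_4) (A3 B3 : 'M[R]_3),
         [/\ \det P = 1, rep_SL A3 B3, semisimple [:: A3; B3],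
             P *m A *m invmx P = incl_i A3 & P *m B *m invmx P = incl_i B3].
    move=> dP uP e1 e2.
    have r := rep_conj uP hrep; rewrite e1 e2 in r.
    have s := ss_conj uP hss; rewrite e1 e2 in s.
    have [rX rY] := @rep_block _ 3 1 _ _ _ _ r.
    have [_ _ cY1 cY2 _] := rY.
    exists P, X1, X2; split => //; first exact: (@ss_block_l _ 3 1 _ _ _ _ s).
      by rewrite e1 /incl_i (one_block cY1).
    by rewrite e2 /incl_i (one_block cY2).
  have fin_j (P : 'M[R]_4) (X1 X2 : 'M[R]_2) (Y1 Y2 : 'M[R]_2) :
      \det P = 1 -> P \in unitmx -> P *m A *m invmx P = block_mx X1 0 0 Y1 ->
      P *m B *m invmx P = block_mx X2 0 0 Y2 ->
      exists (P : 'M[R]_4) (A1 B1 A2 B2 : 'M[R]_2),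
         [/\ \det P = 1, rep_SL A1 B1 /\ semisimple [:: A1; B1],
             rep_SL A2 B2 /\ semisimple [:: A2; B2],
             P *m A *m invmx P = incl_j A1 A2 & P *m B *m invmx P = incl_j B1 B2].
    move=> dP uP e1 e2.
    have r := rep_conj uP hrep; rewrite e1 e2 in r.
    have s := ss_conj uP hss; rewrite e1 e2 in s.
    have [rX rY] := @rep_block _ 2 2 _ _ _ _ r.
    exists P, X1, X2, Y1, Y2; split => //.
      by split => //; exact: (@ss_block_l _ 2 2 _ _ _ _ s).
    by split => //; exact: (@ss_block_r _ 2 2 _ _ _ _ s).
  case eq : (\rank U) => [|r]; first by rewrite eq in rU0.
  case: r eq => [|r] eq.
    have rV : \rank V = 3%N by apply/eqP; rewrite -(eqn_add2l 1) -{1}eq rUV.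
    have [P [X1 [X2 [Y1 [Y2 [dP uP e1 e2]]]]]] := @decomp _ 3 0 A B V U iV iU cVU sVU rV eq.
    split; first by exists U; split => //; left.
    by left; apply: fin_i dP uP e1 e2.
  case: r eq => [|r] eq.
    have rV : \rank V = 2%N by apply/eqP; rewrite -(eqn_add2l 2) -{1}eq rUV.
    have [P [X1 [X2 [Y1 [Y2 [dP uP e1 e2]]]]]] := @decomp _ 2 1 A B U V iU iV cUV sUV eq rV.
    split; first by exists U; split => //; right.
    by right; apply: fin_j dP uP e1 e2.
  case: r eq => [|r] eq.
    have rV : \rank V = 1%N by apply/eqP; rewrite -(eqn_add2l 3) -{1}eq rUV.
    have [P [X1 [X2 [Y1 [Y2 [dP uP e1 e2]]]]]] := @decomp _ 3 0 A B U V iU iV cUV sUV eq rV.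
    split; first by exists V; split => //; left.
    by left; apply: fin_i dP uP e1 e2.
  by rewrite eq in rU4.
- move=> A3 B3 hrep hss; split.
    exact: (@block_rep _ 3 1 _ _ _ _ hrep rep1).
  have := (@semisimple_block _ 3 1 _ _ _ _ hss (@ss_id R 1)).
  by rewrite /incl_i.
- move=> A1 B1 A2 B2 h1 s1 h2 s2; split.
    exact: (@block_rep _ 2 2 _ _ _ _ h1 h2).
  have := (@semisimple_block _ 2 2 _ _ _ _ s1 s2).
  by rewrite /incl_j.
Qed.
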